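(* Let $v,v'$ be two different words in the alphabet $\{y,yx\}$ (i.e. products of the subwords $y$ and $yx$, without inverses). Then $v\neq v'$ in the Baumslag–Gersten group $G=\langle x,y,t\mid x^y=x^2,\ x^t=y\rangle$.
   Context: $a^b$ denotes $b^{-1}ab$. *)

(* Defs.v *)
(* The Baumslag-Gersten group G = < x, y, t | x^y = x^2, x^t = y >
   is given literally by its presentation: words over the letters x^{±1}, y^{±1},
   t^{±1}, with equality in G being the congruence generated by free
   cancellation and insertion/deletion of relators (i.e. u = v in F/N). *)
From Stdlib Require Import List.
Import ListNotations.

Inductive gen : Type := gx | gy | gt.

(* a letter: generator together with a flag, true = inverse *)
Definition letter : Type := (gen * bool)%type.
Definition word : Type := list letter.

Definition inv_letter (a : letter) : letter := (fst a, negb (snd a)).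

Definition Lx : letter := (gx, false).
Definition Lxi : letter := (gx, true).
Definition Ly : letter := (gy, false).
Definition Lyi : letter := (gy, true).
Definition Lt : letter := (gt, false).
Definition Lti : letter := (gt, true).

(* a^b = b^{-1} a b.
   Relator 1:  x^y x^{-2} = y^{-1} x y x^{-1} x^{-1}
   Relator 2:  x^t y^{-1} = t^{-1} x t y^{-1} *)
Definition BG_relators : list word :=
  [ [Lyi; Lx; Ly; Lxi; Lxi] ; [Lti; Lx; Lt; Lyi] ].

Inductive BG_eq : word -> word -> Prop :=
| BG_refl u : BG_eq u u
| BG_sym u v : BG_eq u v -> BG_eq v u
| BG_trans u v w : BG_eq u v -> BG_eq v w -> BG_eq u w
| BG_free u v a : BG_eq (u ++ a :: inv_letter a :: v) (u ++ v)
| BG_rel u v r : In r BG_relators -> BG_eq (u ++ r ++ v) (u ++ v).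

Definition yyx_letter (b : bool) : word := if b then [Ly; Lx] else [Ly].
Definition yyx_word (s : list bool) : word := concat (map yyx_letter s).

(* Main.v *)
Require Import Defs.
From Stdlib Require Import List.
From Stdlib Require Import Reals Lra Lia ZArith.
Import ListNotations.
Open Scope R_scope.

Definition fl (r : R) : Z := (up r - 1)%Z.

Lemma fl_spec r : IZR (fl r) <= r < IZR (fl r) + 1.
Proof.
  unfold fl. rewrite minus_IZR. destruct (archimed r). simpl. lra.
Qed.

Lemma fl_unique r n : IZR n <= r < IZR n + 1 -> fl r = n.
Proof.
  intros [H1 H2]. unfold fl.
  assert (E : (n + 1)%Z = up r).
  { apply tech_up; rewrite plus_IZR; simpl; lra. }
  lia.
Qed.

Definition p2 (k : Z) : R := powerRZ 2 k.

Lemma p2_pos k : 0 < p2 k.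
Proof. unfold p2. apply powerRZ_lt. lra. Qed.

Lemma p2_S k : p2 (k + 1) = 2 * p2 k.
Proof.
  unfold p2. rewrite powerRZ_add by lra. simpl. lra.
Qed.

Definition T (s : R * Z) : R * Z :=
  let (a, k) := s in
  let q := a / p2 k in
  (IZR k + q - IZR (fl q), (- fl q)%Z).

Definition T' (s : R * Z) : R * Z :=
  let (b, m) := s in
  let c := fl b in
  (p2 c * (b - IZR c - IZR m), c).

Definition act_letter (l : letter) (s : R * Z) : R * Z :=
  let (a, k) := s in
  match l with
  | (gx, false) => (a + p2 k, k)
  | (gx, true) => (a - p2 k, k)
  | (gy, false) => (a, (k - 1)%Z)
  | (gy, true) => (a, (k + 1)%Z)
  | (gt, false) => T (a, k)
  | (gt, true) => T' (a, k)
  end.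

Definition act (w : word) (s : R * Z) : R * Z :=
  fold_left (fun s l => act_letter l s) w s.

Lemma TT' s : T (T' s) = s.
Proof.
  destruct s as [b m]. unfold T', T.
  set (c := fl b).
  pose proof (p2_pos c) as Hp.
  assert (Eq : p2 c * (b - IZR c - IZR m) / p2 c = b - IZR c - IZR m)
    by (field; lra).
  rewrite Eq.
  assert (Ef : fl (b - IZR c - IZR m) = (- m)%Z).
  { apply fl_unique. rewrite opp_IZR. pose proof (fl_spec b) as Hs. fold c in Hs. lra. }
  rewrite Ef, opp_IZR. f_equal; [lra | lia].
Qed.

Lemma T'T s : T' (T s) = s.
Proof.
  destruct s as [a k]. unfold T', T.
  pose proof (p2_pos k) as Hp.
  set (q := a / p2 k).
  pose proof (fl_spec q) as Hq.
  assert (Ef : fl (IZR k + q - IZR (fl q)) = k).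
  { apply fl_unique. lra. }
  rewrite Ef. f_equal. rewrite opp_IZR. unfold q. field. lra.
Qed.

Lemma act_app u v s : act (u ++ v) s = act v (act u s).
Proof. unfold act. apply fold_left_app. Qed.

Lemma act_cons l v s : act (l :: v) s = act v (act_letter l s).
Proof. reflexivity. Qed.

Lemma inv_ok a s : act_letter (inv_letter a) (act_letter a s) = s.
Proof.
  destruct s as [x k]. destruct a as [[] []].
  - simpl; f_equal; lra.
  - simpl; f_equal; lra.
  - simpl; f_equal; lia.
  - simpl; f_equal; lia.
  - change (act_letter Lt (T' (x, k)) = (x, k)).
    rewrite <- (TT' (x, k)) at 2. destruct (T' (x, k)); reflexivity.
  - change (act_letter Lti (T (x, k)) = (x, k)).
    rewrite <- (T'T (x, k)) at 2. destruct (T (x, k)); reflexivity.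
Qed.

Lemma rel_ok r s : In r BG_relators -> act r s = s.
Proof.
  destruct s as [a k].
  intros [H | [H | []]]; subst r.
  - unfold act; simpl.
    replace (k + 1 - 1)%Z with k by lia.
    rewrite p2_S. f_equal. lra.
  - unfold act; simpl.
    set (c := fl a).
    pose proof (p2_pos c) as Hp.
    assert (Eq : (p2 c * (a - IZR c - IZR k) + p2 c) / p2 c
                 = (a - IZR c - IZR k) + 1) by (field; lra).
    rewrite Eq.
    assert (Ef : fl (a - IZR c - IZR k + 1) = (1 - k)%Z).
    { apply fl_unique. rewrite minus_IZR. pose proof (fl_spec a) as Hs. fold c in Hs. lra. }
    rewrite Ef, minus_IZR. f_equal; [lra | lia].
Qed.

Lemma act_inv u v : BG_eq u v -> forall s, act u s = act v s.
Proof.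
  induction 1; intros s.
  - reflexivity.
  - symmetry; auto.
  - rewrite IHBG_eq1; auto.
  - rewrite !act_app, act_cons, act_cons, inv_ok. reflexivity.
  - rewrite !act_app, (rel_ok r); auto.
Qed.

Fixpoint Gs (v : list bool) (k : Z) : R :=
  match v with
  | [] => 0
  | b :: v => (if b then p2 (k - 1) else 0) + Gs v (k - 1)
  end.

Lemma act_yyx v : forall a k,
  act (yyx_word v) (a, k) = (a + Gs v k, (k - Z.of_nat (length v))%Z).
Proof.
  induction v as [|b v IH]; intros a k.
  - simpl. f_equal; [lra | lia].
  - change (yyx_word (b :: v)) with (yyx_letter b ++ yyx_word v).
    rewrite act_app. destruct b; simpl.
    + rewrite IH. f_equal; [simpl; lra | lia].
    + rewrite IH. f_equal; [simpl; lra | lia].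
Qed.

Lemma Gs_bound v : forall k, 0 <= Gs v k < p2 k.
Proof.
  induction v as [|b v IH]; intros k; simpl.
  - pose proof (p2_pos k). lra.
  - pose proof (IH (k - 1)%Z). pose proof (p2_pos (k - 1)).
    pose proof (p2_S (k - 1)). replace (k - 1 + 1)%Z with k in H1 by lia.
    destruct b; lra.
Qed.

Lemma Gs_inj v : forall v' k, length v = length v' -> Gs v k = Gs v' k -> v = v'.
Proof.
  induction v as [|b v IH]; intros [|b' v'] k Hl He; simpl in *; try discriminate.
  - reflexivity.
  - injection Hl as Hl.
    pose proof (Gs_bound v (k - 1)). pose proof (Gs_bound v' (k - 1)).
    destruct b, b'.
    + f_equal. apply (IH v' (k - 1)%Z); auto. lra.
    + lra.
    + lra.
    + f_equal. apply (IH v' (k - 1)%Z); auto. lra.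
Qed.

Theorem lemma2p2 (v v' : list bool) :
  v <> v' -> ~ BG_eq (yyx_word v) (yyx_word v').
Proof.
  intros Hne Heq. apply Hne.
  pose proof (act_inv _ _ Heq (0, 0%Z)) as H.
  rewrite !act_yyx in H. injection H as H1 H2.
  assert (Hl : length v = length v') by lia.
  apply (Gs_inj v v' 0%Z Hl). lra.
Qed.
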